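(* Let $(b,c)$ be a weighted graph over $V$ and $m$ a measure on $V$ satisfying condition (A). Let $\alpha>0$, $p\in[1,\infty)$ and $u\in\ell^p(V,m)\cap\widetilde F$ with $(\widetilde L+\alpha)u\ge0$ on $V$. Then $u\ge0$. In particular, every $u\in\ell^p(V,m)\cap\widetilde F$ with $(\widetilde L+\alpha)u=0$ satisfies $u\equiv0$.
   Context: Let $V$ be a countably infinite set. A weighted graph over $V$ is a pair $(b,c)$ of maps $b:V\times V\to[0,\infty)$ and $c:V\to[0,\infty)$ with $b(x,x)=0$, $b(x,y)=b(y,x)$ and $\sum_{y\in V}b(x,y)<\infty$ for all $x,y\in V$. A measure on $V$ is a map $m:V\to(0,\infty)$; $\ell^p(V,m)$ is the space of real functions $u$ with $\sum_x m(x)|u(x)|^p<\infty$. Let $\widetilde F=\{u:V\to\mathbb R:\ \sum_y b(x,y)|u(y)|<\infty\text{ for all }x\}$ and define $\widetilde Lu(x)=\frac1{m(x)}\sum_y b(x,y)(u(x)-u(y))+\frac{c(x)}{m(x)}u(x)$ for $u\in\widetilde F$. Condition (A): for every sequence $(x_n)_{n\in\mathbb N}$ in $V$ with $b(x_n,x_{n+1})>0$ for all $n$, one has $\sum_{n\in\mathbb N}m(x_n)=\infty$. *)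

(* Defs.v *)
From Stdlib Require Import Reals Lra List ClassicalEpsilon.
Open Scope R_scope.

Definition countably_infinite (V : Type) : Prop :=
  exists (f : V -> nat) (g : nat -> V),
    (forall x, g (f x) = x) /\ (forall n, f (g n) = n).

Fixpoint lsum {V : Type} (f : V -> R) (l : list V) : R :=
  match l with nil => 0 | cons x l' => f x + lsum f l' end.

Definition abs_summable {V : Type} (f : V -> R) : Prop :=
  exists M, forall l : list V, NoDup l -> lsum (fun x => Rabs (f x)) l <= M.

(* unconditional sum (limit along the net of finite subsets) *)
Definition has_sum {V : Type} (f : V -> R) (s : R) : Prop :=
  forall eps, 0 < eps -> exists l0 : list V,
    forall l, NoDup l -> incl l0 l -> Rabs (lsum f l - s) < eps.

(* the value of the sum \sum_{y in V} f y (junk 0 if not summable) *)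
Definition tsum {V : Type} (f : V -> R) : R :=
  match excluded_middle_informative (exists s, has_sum f s) with
  | left H => proj1_sig (constructive_indefinite_description _ H)
  | right _ => 0
  end.

Definition weighted_graph {V : Type} (b : V -> V -> R) (c : V -> R) : Prop :=
  (forall x y, 0 <= b x y) /\ (forall x, 0 <= c x) /\
  (forall x, b x x = 0) /\ (forall x y, b x y = b y x) /\
  (forall x, abs_summable (fun y => b x y)).

Definition measure {V : Type} (m : V -> R) : Prop := forall x, 0 < m x.

(* |t|^p, with 0^p = 0 (p >= 1) *)
Definition rpow_abs (t p : R) : R :=
  if Req_EM_T t 0 then 0 else Rpower (Rabs t) p.

Definition in_lp {V : Type} (m : V -> R) (p : R) (u : V -> R) : Prop :=
  abs_summable (fun x => m x * rpow_abs (u x) p).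

Definition in_Ftilde {V : Type} (b : V -> V -> R) (u : V -> R) : Prop :=
  forall x, abs_summable (fun y => b x y * u y).

Definition Ltilde {V : Type} (b : V -> V -> R) (c m : V -> R) (u : V -> R) (x : V) : R :=
  / m x * tsum (fun y => b x y * (u x - u y)) + c x / m x * u x.

Definition condA {V : Type} (b : V -> V -> R) (m : V -> R) : Prop :=
  forall xs : nat -> V, (forall n, 0 < b (xs n) (xs (S n))) ->
    forall M : R, exists N : nat, M < sum_f_R0 (fun n => m (xs n)) N.

(* Main.v *)
Require Import Defs.
From Stdlib Require Import Reals.
From Stdlib Require Import Lra List ClassicalEpsilon FunctionalExtensionality FinFun.
Open Scope R_scope.

Lemma lsum_opp {V : Type} (f : V -> R) l : lsum (fun x => - f x) l = - lsum f l.
Proof. induction l; simpl; [lra| rewrite IHl; lra]. Qed.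

Lemma lsum_nonneg {V : Type} (f : V -> R) l : (forall y, 0 <= f y) -> 0 <= lsum f l.
Proof. intro H; induction l; simpl; [lra| specialize (H a); lra]. Qed.

Lemma lsum_app {V : Type} (f : V -> R) l1 l2 : lsum f (l1 ++ l2) = lsum f l1 + lsum f l2.
Proof. induction l1; simpl; [lra| rewrite IHl1; lra]. Qed.

Lemma has_sum_nonneg {V : Type} (f : V -> R) s :
  has_sum f s -> (forall y, 0 <= f y) -> 0 <= s.
Proof.
  intros Hs Hf. destruct (Rle_or_lt 0 s) as [h|h]; auto.
  destruct (Hs (- s)) as [l0 Hl0]; [lra|].
  assert (dec : forall x y : V, {x = y} + {x <> y})
    by (intros x y; apply excluded_middle_informative).
  specialize (Hl0 (nodup dec l0) (NoDup_nodup dec l0)).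
  assert (incl l0 (nodup dec l0)) by (intros z Hz; apply nodup_In; auto).
  specialize (Hl0 H). pose proof (lsum_nonneg f (nodup dec l0) Hf).
  apply Rabs_def2 in Hl0. lra.
Qed.

Lemma tsum_nonneg {V : Type} (f : V -> R) : (forall y, 0 <= f y) -> 0 <= tsum f.
Proof.
  intro Hf. unfold tsum. destruct excluded_middle_informative as [H|H]; [|lra].
  destruct (constructive_indefinite_description _ H) as [s Hs]; simpl.
  eapply has_sum_nonneg; eauto.
Qed.

Lemma tsum_nonpos {V : Type} (f : V -> R) : (forall y, f y <= 0) -> tsum f <= 0.
Proof.
  intro Hf. unfold tsum. destruct excluded_middle_informative as [H|H]; [|lra].
  destruct (constructive_indefinite_description _ H) as [s Hs]; simpl.
  assert (0 <= - s); [|lra].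
  apply (has_sum_nonneg (fun x => - f x)); [|intro y; specialize (Hf y); lra].
  intros eps He. destruct (Hs eps He) as [l0 Hl0]. exists l0. intros l Hn Hi.
  rewrite lsum_opp. specialize (Hl0 l Hn Hi).
  replace (- lsum f l - - s) with (- (lsum f l - s)) by ring. rewrite Rabs_Ropp. auto.
Qed.

Fixpoint iter_seq {V : Type} (g : V -> V) (x0 : V) (n : nat) : V :=
  match n with O => x0 | S k => g (iter_seq g x0 k) end.

Lemma chain {V : Type} (b : V -> V -> R) (m : V -> R) (u : V -> R) (p : R)
  (Hm : measure m) (HA : condA b m) (Hp : 1 <= p)
  (Hlp : abs_summable (fun x => m x * rpow_abs (u x) p))
  (Hstep : forall x, u x < 0 -> exists y, 0 < b x y /\ u y < u x) :
  forall x, 0 <= u x.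
Proof.
  intro x0. destruct (Rle_or_lt 0 (u x0)) as [h|h0]; auto. exfalso.
  set (g := fun x => match excluded_middle_informative
                       (exists y, 0 < b x y /\ u y < u x) with
                     | left H => proj1_sig (constructive_indefinite_description _ H)
                     | right _ => x end).
  assert (Hg : forall x, u x < 0 -> 0 < b x (g x) /\ u (g x) < u x).
  { intros x Hx. unfold g. destruct excluded_middle_informative as [H|H].
    - destruct (constructive_indefinite_description _ H) as [y Hy]; simpl; auto.
    - exfalso; apply H; auto. }
  set (xs := iter_seq g x0).
  assert (Hinv : forall n, u (xs n) <= u x0 /\ 0 < b (xs n) (xs (S n))
                           /\ u (xs (S n)) < u (xs n)).
  { induction n.
    - simpl. destruct (Hg x0 h0). unfold xs; simpl. split; [lra|]; auto.
    - destruct IHn as [A1 [A2 A3]].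
      assert (u (xs (S n)) < 0) by lra.
      destruct (Hg _ H). split; [lra|]. unfold xs in *; simpl in *. auto. }
  assert (Hdec : forall n k, (n < k)%nat -> u (xs k) < u (xs n)).
  { intros n k Hnk. induction Hnk.
    - apply Hinv.
    - destruct (Hinv m0) as [_ [_ A]]. lra. }
  assert (Hinj : Injective xs).
  { intros i j Hij. destruct (Nat.lt_total i j) as [H|[H|H]]; auto.
    - apply Hdec in H. rewrite Hij in H. lra.
    - apply Hdec in H. rewrite Hij in H. lra. }
  set (k := Rpower (Rabs (u x0)) p).
  assert (Hk : 0 < k) by (unfold k, Rpower; apply exp_pos).
  set (F := fun x => Rabs (m x * rpow_abs (u x) p)).
  assert (HF : forall n, k * m (xs n) <= F (xs n)).
  { intro n. destruct (Hinv n) as [A _].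
    unfold F, rpow_abs. destruct Req_EM_T as [e|e]; [lra|].
    pose proof (Hm (xs n)).
    assert (k <= Rpower (Rabs (u (xs n))) p).
    { apply Rle_Rpower_l; [lra|]. rewrite !Rabs_left by lra. lra. }
    rewrite Rabs_right.
    - nra.
    - apply Rle_ge, Rmult_le_pos; lra. }
  assert (Hsum : forall N, k * sum_f_R0 (fun n => m (xs n)) N
                           <= lsum F (map xs (seq 0 (S N)))).
  { induction N.
    - simpl. specialize (HF 0%nat). lra.
    - rewrite seq_S, map_app, lsum_app. cbn [sum_f_R0 lsum map Nat.add]. specialize (HF (S N)). lra. }
  destruct Hlp as [M HM].
  assert (Hc : forall n, 0 < b (xs n) (xs (S n))) by apply Hinv.
  destruct (HA xs Hc (M / k)) as [N HN].
  specialize (HM (map xs (seq 0 (S N)))).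
  assert (NoDup (map xs (seq 0 (S N)))).
  { apply Injective_map_NoDup; auto. apply seq_NoDup. }
  specialize (HM H). specialize (Hsum N). fold F in HM.
  apply (Rmult_lt_compat_l k) in HN; auto.
  replace (k * (M / k)) with M in HN by (field; lra). lra.
Qed.

Theorem mainTheorem3 (V : Type) (b : V -> V -> R) (c m : V -> R)
  (HV : countably_infinite V) (Hg : weighted_graph b c) (Hm : measure m)
  (HA : condA b m) (alpha p : R) (Halpha : 0 < alpha) (Hp : 1 <= p) :
  (forall u : V -> R, in_lp m p u -> in_Ftilde b u ->
     (forall x, 0 <= Ltilde b c m u x + alpha * u x) ->
     forall x, 0 <= u x) /\
  (forall u : V -> R, in_lp m p u -> in_Ftilde b u ->
     (forall x, Ltilde b c m u x + alpha * u x = 0) ->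
     forall x, u x = 0).
Proof.
  destruct Hg as [Hb [Hc _]].
  assert (P1 : forall u : V -> R, in_lp m p u ->
     (forall x, 0 <= Ltilde b c m u x + alpha * u x) ->
     forall x, 0 <= u x).
  { intros u Hlp HL. apply (chain b m u p Hm HA Hp Hlp).
    intros x Hx. specialize (HL x). unfold Ltilde in HL.
    set (T := tsum (fun y => b x y * (u x - u y))) in *.
    pose proof (Hm x). pose proof (Hc x).
    assert (HT : 0 < T).
    { assert (0 <= m x * (/ m x * T + c x / m x * u x + alpha * u x))
        by (apply Rmult_le_pos; lra).
      replace (m x * (/ m x * T + c x / m x * u x + alpha * u x))
        with (T + c x * u x + alpha * m x * u x) in H1 by (field; lra).
      assert (c x * u x <= 0) by nra.
      assert (alpha * m x * u x < 0).
      { assert (0 < alpha * m x) by (apply Rmult_lt_0_compat; lra). nra. }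
      lra. }
    destruct (classic (exists y, 0 < b x y /\ u y < u x)) as [E|E]; auto.
    exfalso. assert (T <= 0); [|lra]. apply tsum_nonpos. intro y.
    destruct (Rle_or_lt (u x) (u y)).
    - specialize (Hb x y); nra.
    - specialize (Hb x y). destruct Hb as [Hb|Hb].
      + exfalso; apply E; exists y; auto.
      + rewrite <- Hb; lra. }
  split.
  - intros u Hlp _ HL. apply P1; auto.
  - intros u Hlp _ HL x.
    assert (0 <= u x) by (apply P1; auto; intro z; rewrite HL; apply Rle_refl).
    assert (0 <= - u x); [|lra].
    apply (chain b m (fun z => - u z) p Hm HA Hp).
    + replace (fun x => m x * rpow_abs (- u x) p) with (fun x => m x * rpow_abs (u x) p); auto.
      apply functional_extensionality; intro z. unfold rpow_abs.
      destruct Req_EM_T; destruct Req_EM_T; try lra; rewrite ?Rabs_Ropp; auto.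
    + intros z Hz. specialize (HL z). unfold Ltilde in HL.
      set (T := tsum (fun y => b z y * (u z - u y))) in *.
      pose proof (Hm z). pose proof (Hc z).
      assert (HT : T < 0).
      { replace T with (m z * (/ m z * T + c z / m z * u z + alpha * u z)
                        - c z * u z - alpha * m z * u z) by (field; lra).
        rewrite HL.
        assert (0 <= c z * u z) by (apply Rmult_le_pos; lra).
        assert (0 < alpha * m z * u z) by (repeat apply Rmult_lt_0_compat; lra).
        lra. }
      destruct (classic (exists y, 0 < b z y /\ - u y < - u z)) as [E|E]; auto.
      exfalso. assert (0 <= T); [|lra]. apply tsum_nonneg. intro y.
      destruct (Rle_or_lt (u y) (u z)).
      * apply Rmult_le_pos; [apply Hb|lra].
      * specialize (Hb z y). destruct Hb as [Hb|Hb].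
        -- exfalso; apply E; exists y; split; auto; lra.
        -- rewrite <- Hb; lra.
Qed.
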